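(* Let $G$ be a finite simple graph, let $J\in \mathcal{E}\mathcal{C}(G)$, and let $e$ be a pair of distinct vertices of $G$. Then: (1) for $I\subseteq J$, $I\in\mathcal{E}\mathcal{C}(G)$ if and only if $I\in\mathcal{E}\mathcal{C}(G|_J)$; (2) for $J\subseteq I\subseteq V(G)$, $I\in\mathcal{E}\mathcal{C}(G)$ if and only if $I\setminus J\in\mathcal{E}\mathcal{C}(G^\ast_J)$; (3) $\mathcal{E}\mathcal{C}(G)\subseteq\mathcal{E}\mathcal{C}(G+e)$, and every $I\in\mathcal{E}\mathcal{C}(G+e)\setminus\mathcal{E}\mathcal{C}(G)$ satisfies $e\subseteq I$.
   Context: All graphs are finite simple graphs; $G|_I$ is the induced subgraph on $I\subseteq V(G)$. $\mathcal{E}\mathcal{C}(G)=\{I\subseteq V(G): G|_I \text{ has no connected component of odd order}\}$ (so $\emptyset\in\mathcal{E}\mathcal{C}(G)$). For a pair $e$ of distinct vertices, $G+e$ is the graph obtained from $G$ by adding $e$ as an edge ($G+e=G$ if $e$ is already an edge). The reconnected complement $G^\ast_I$ is the graph on $V(G)\setminus I$ in which $\{a,b\}$ is an edge iff there is a path from $a$ to $b$ in $G|_{I\cup\{a,b\}}$. *)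

(* Defs.v *)
(* A finite simple graph is a finType T of vertices together
   with a symmetric irreflexive relation E.  To talk about induced subgraphs
   and reconnected complements, a graph is (V, E) with vertex set V : {set T};
   only the edges of E between vertices of V matter. *)
From mathcomp Require Import all_boot.
Set Implicit Arguments. Unset Strict Implicit. Unset Printing Implicit Defensive.

Section Defs.
Variable T : finType.

Definition restr (A : {set T}) (E : rel T) : rel T :=
  fun x y => [&& x \in A, y \in A & E x y].

(* the connected component of x in G|_A (for x \in A) *)
Definition comp (A : {set T}) (E : rel T) (x : T) : {set T} :=
  [set y | connect (restr A E) x y].

Definition has_odd_comp (A : {set T}) (E : rel T) : bool :=
  [exists x in A, odd #|comp A E x|].

Definition EC (V : {set T}) (E : rel T) : {set {set T}} :=
  [set I : {set T} | (I \subset V) && ~~ has_odd_comp I E].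

(* reconnected complement G^*_J, as a relation on T; its vertex set is V :\: J *)
Definition recon (V : {set T}) (E : rel T) (J : {set T}) : rel T :=
  fun a b => [&& a != b, a \in V :\: J, b \in V :\: J &
                 connect (restr (J :|: [set a; b]) E) a b].

Definition addedge (E : rel T) (u v : T) : rel T :=
  fun x y => [|| E x y, (x == u) && (y == v) | (x == v) && (y == u)].

End Defs.

(* Main.v *)
Require Import Defs.
From mathcomp Require Import all_boot.
Set Implicit Arguments. Unset Strict Implicit. Unset Printing Implicit Defensive.

Section Aux.
Variable T : finType.

Lemma cind (e : rel T) (P : T -> Prop) x :
  P x -> (forall y z, P y -> e y z -> P z) -> forall y, connect e x y -> P y.
Proof.
move=> Px IH y /connectP [p pth ->] {y}.
elim: p x Px pth => [|z p IHp] x Px //= /andP [exz pz].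
exact: (IHp z (IH _ _ Px exz) pz).
Qed.

Lemma cmono (e e' : rel T) : (forall x y, e x y -> e' x y) ->
  forall x y, connect e x y -> connect e' x y.
Proof.
move=> H x; apply: cind => [|y z Hy /H Hz]; first exact: connect0.
exact: connect_trans Hy (connect1 Hz).
Qed.

Lemma crestr_in (A : {set T}) R x y : x \in A -> connect (restr A R) x y -> y \in A.
Proof. by move=> xA; move: y; apply: cind => // y z _ /and3P [_ ? _]. Qed.

Lemma restr_sym (A : {set T}) R : symmetric R -> symmetric (restr A R).
Proof. by move=> Rs x y; rewrite /restr Rs; case: (x \in A); case: (y \in A). Qed.

Lemma restr_sub (A B : {set T}) R x y : A \subset B -> restr A R x y -> restr B R x y.
Proof.
by move=> /subsetP AB /and3P [xA yA r]; rewrite /restr (AB _ xA) (AB _ yA).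
Qed.

Lemma even_union (e : rel T) (S : {set T}) : connect_sym e ->
  (forall x y, x \in S -> connect e x y -> y \in S) ->
  (forall x, x \in S -> ~~ odd #|[set y | connect e x y]|) -> ~~ odd #|S|.
Proof.
move=> esym; have [m] := ubnP #|S|; elim: m S => // m IH S ltS clS evS.
case: (set_0Vmem S) => [-> | [x xS]]; first by rewrite cards0.
set C := [set y | connect e x y].
have CS : C \subset S by apply/subsetP => y; rewrite inE; exact: clS.
rewrite -(cardsID C S) (setIidPr CS) oddD (negbTE (evS x xS)) /=.
apply: IH.
- rewrite ltnS in ltS; apply: leq_trans ltS; apply: proper_card; apply/properP; split.
    exact: subsetDl.
  by exists x => //; rewrite !inE connect0.
- move=> y z; rewrite !inE => /andP [yC yS] yz; rewrite (clS y z yS yz) andbT.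
  apply: contra yC => xz; by rewrite (connect_trans xz) // esym.
- by move=> y; rewrite inE => /andP [_ /evS].
Qed.

Section Part2.
Variables (E : rel T) (Esym : symmetric E) (J I : {set T}).
Hypothesis HJ : forall x, x \in J -> ~~ odd #|Defs.comp J E x|.
Hypothesis JI : J \subset I.
Let K := I :\: J.
Let R := recon [set: T] E J.

Lemma conn_K a b : a \in K -> b \in K -> connect (restr I E) a b -> connect (restr K R) a b.
Proof.
move=> aK bK c.
have : exists z, [/\ z \in K, connect (restr K R) a z &
                   connect (restr (J :|: [set z]) E) z b].
  move: b {bK} c; apply: cind.
    by exists a; split => //; exact: connect0.
  move=> y w [z [zK az zy]] /and3P [yI wI Eyw].
  have yJz : y \in J :|: [set z] by apply: crestr_in zy; rewrite !inE eqxx orbT.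
  case wJ: (w \in J).
    exists z; split => //; apply: connect_trans zy (connect1 _).
    by rewrite /restr yJz Eyw !inE wJ.
  have wK : w \in K by rewrite !inE wJ wI.
  case: (eqVneq z w) => [<-|zw].
    by exists z; split => //; exact: connect0.
  exists w; split; [done | | exact: connect0].
  apply: connect_trans az (connect1 _).
  rewrite /restr zK wK /= /R /recon zw !inE.
  move: zK; rewrite !inE => /andP [-> _] /=; rewrite wJ /=.
  apply: connect_trans (cmono _ zy) (connect1 _).
    move=> p q; apply: restr_sub; apply/subsetP => t; rewrite !inE.
    by case/orP => ->; rewrite ?orbT.
  by rewrite /restr Eyw !inE wJ eqxx orbT andbT; move: yJz; rewrite !inE => /orP [] ->; rewrite ?orbT.
case=> z [zK az zb].
have : b \in J :|: [set z] by apply: crestr_in zb; rewrite !inE eqxx orbT.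
move: bK; rewrite !inE => /andP [/negbTE -> _] /= /eqP ->; exact: az.
Qed.

Lemma conn_K' a b : connect (restr K R) a b -> connect (restr I E) a b.
Proof.
move: b; apply: cind; first exact: connect0.
move=> y w ay /and3P [yK wK] /and4P [_ _ _ c]; apply: connect_trans ay _.
apply: cmono c => p q; apply: restr_sub; apply/subsetP => t; rewrite !inE.
move: yK wK; rewrite !inE => /andP [_ yI] /andP [_ wI].
case/orP => [tJ|/orP [] /eqP ->] //; exact: (subsetP JI).
Qed.

Lemma comp_K b : b \in K -> Defs.comp I E b :\: J = Defs.comp K R b.
Proof.
move=> bK; have bI : b \in I by move: bK; rewrite !inE => /andP [].
apply/setP => y; rewrite !inE; apply/andP/idP => [[yJ c]|c].
  apply: conn_K => //; rewrite !inE yJ; exact: crestr_in c.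
have : y \in K by exact: crestr_in c.
by rewrite !inE => /andP [-> _]; split => //; exact: conn_K'.
Qed.

Lemma partJ x : x \in I -> ~~ odd #|Defs.comp I E x :&: J|.
Proof.
move=> xI; apply: (@even_union (restr J E)).
- exact/sym_connect_sym/restr_sym.
- move=> y z; rewrite !inE => /andP [xy yJ] yz.
  rewrite (crestr_in yJ yz) andbT; apply: connect_trans xy (cmono _ yz).
  by move=> p q; apply: restr_sub.
- by move=> y; rewrite !inE => /andP [_ /HJ].
Qed.

Lemma parity x : x \in I -> odd #|Defs.comp I E x| = odd #|Defs.comp I E x :\: J|.
Proof. by move=> xI; rewrite -(cardsID J (Defs.comp I E x)) oddD (negbTE (partJ xI)). Qed.

Lemma part2 : has_odd_comp I E = has_odd_comp K R.
Proof.
have csym : connect_sym (restr I E) by exact/sym_connect_sym/restr_sym.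
apply/exists_inP/exists_inP => [[x xI]|[b bK]].
  rewrite parity // => o.
  have : 0 < #|Defs.comp I E x :\: J| by case: #|_| o.
  rewrite card_gt0 => /set0Pn [b]; rewrite !inE => /andP [bJ xb].
  have bK : b \in K by rewrite !inE bJ (crestr_in xI xb).
  exists b => //; rewrite -comp_K //.
  suff -> : Defs.comp I E b = Defs.comp I E x by [].
  by apply/setP => y; rewrite !inE (same_connect csym xb).
have bI : b \in I by move: bK; rewrite !inE => /andP [].
by rewrite -comp_K // => o; exists b => //; rewrite parity.
Qed.
End Part2.

End Aux.

Theorem mainTheorem4 (T : finType) (E : rel T)
    (Esym : symmetric E) (Eirr : irreflexive E)
    (J : {set T}) (u v : T) :
  J \in EC [set: T] E -> u != v ->
  (forall I : {set T}, I \subset J ->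
     (I \in EC [set: T] E) = (I \in EC J E)) /\
  (forall I : {set T}, J \subset I ->
     (I \in EC [set: T] E) =
     ((I :\: J) \in EC (~: J) (recon [set: T] E J))) /\
  (EC [set: T] E \subset EC [set: T] (addedge E u v)) /\
  (forall I : {set T}, I \in EC [set: T] (addedge E u v) ->
     I \notin EC [set: T] E -> (u \in I) && (v \in I)).
Proof.
move=> HJ _.
have HJ' : forall x, x \in J -> ~~ odd #|Defs.comp J E x|.
  by move: HJ; rewrite inE subsetT /= => /exists_inPn.
split; first by move=> I IJ; rewrite !inE subsetT IJ.
split.
  move=> I JI; rewrite !inE subsetT /=; have -> : I :\: J \subset ~: J by rewrite setDE subsetIr.
  by rewrite (part2 Esym HJ' JI).
have Asym : symmetric (addedge E u v).
  move=> x y; rewrite /addedge Esym; congr (_ || _).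
  by rewrite orbC andbC [(y == v) && _]andbC.
split.
  apply/subsetP => I; rewrite !inE subsetT /= => /exists_inPn H.
  apply/exists_inPn => x xI; apply: (@even_union _ (restr I E)).
  - exact/sym_connect_sym/restr_sym.
  - move=> y z; rewrite !inE => xy yz; apply: connect_trans xy (cmono _ yz).
    by move=> p q /and3P [pI qI Epq]; rewrite /restr pI qI /addedge Epq.
  - by move=> y; rewrite inE => xy; apply: H; exact: crestr_in xy.
move=> I H1; apply: contraR => Huv; move: H1; rewrite !inE subsetT /=.
have eqr : restr I (addedge E u v) =2 restr I E.
  move=> x y; rewrite /restr /addedge; case xI: (x \in I); case yI: (y \in I) => //=.
  case: (E x y) => //=; apply/negP; case/orP => /andP [/eqP ex /eqP ey];
    by rewrite -ex -ey xI yI in Huv.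
have Hc : forall x, Defs.comp I (addedge E u v) x = Defs.comp I E x.
  by move=> x; apply/setP => y; rewrite !inE (eq_connect eqr).
by rewrite /has_odd_comp; under eq_existsb do rewrite Hc.
Qed.
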